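(* Let $q\ge2$ and $d\ge2$ be integers and, for $\beta\ge0$, $B\in\mathbb R$, $r\in\mathbb R$, let $$f(r;\beta,B)=B+(d-1)\log\Big(\frac{e^{\beta+r}+q-1}{e^r+e^\beta+q-2}\Big).$$ There exists $\beta_-\in(0,\infty]$ (with $\beta_-=\infty$ if $d=2$ and $\beta_-<\infty$ if $d>2$) such that: for $0\le\beta\le\beta_-$ the map $r\mapsto f(r;\beta,B)$ has exactly one fixed point for every $B\in\mathbb R$; and for $\beta>\beta_-$ there exist real numbers $B_-(\beta)<B_+(\beta)$, depending smoothly on $\beta$, such that $f(\cdot;\beta,B)$ has exactly one fixed point if $B\notin[B_-(\beta),B_+(\beta)]$, exactly two if $B\in\{B_-(\beta),B_+(\beta)\}$, and exactly three if $B\in(B_-(\beta),B_+(\beta))$. When $\beta_-<\infty$, $B_\pm$ extend continuously to $\beta_-$ with $B_-(\beta_-)=B_+(\beta_-)$.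
   Context: No additional definitions are needed beyond the formula for $f$. *)

(* Defs.v *)
From Stdlib Require Import Reals Lra Lia List.
Open Scope R_scope.

Definition fmap (q d : nat) (beta B r : R) : R :=
  B + (INR d - 1) *
      ln ((exp (beta + r) + INR q - 1) / (exp r + exp beta + INR q - 2)).

Definition exactly_n_fixed_points (n : nat) (g : R -> R) : Prop :=
  exists l : list R, NoDup l /\ length l = n /\
    (forall r, In r l <-> g r = r).

Definition smooth_on_right_of (a : R) (g : R -> R) : Prop :=
  exists D : nat -> R -> R,
    (forall x, a < x -> D O x = g x) /\
    (forall n x, a < x -> derivable_pt_lim (D n) x (D (S n) x)).

(* Main.v *)
Require Import Defs.
From Stdlib Require Import Reals Lra Lia List Psatz.
Open Scope R_scope.

Inductive ex : Type :=
| EVar | ECst (c : R) | EAdd (e1 e2 : ex) | EMul (e1 e2 : ex)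
| EExp (e : ex) | ELn (e : ex) | EInv (e : ex) | ESqrt (e : ex).

Fixpoint ev (e : ex) (x : R) : R :=
  match e with
  | EVar => x
  | ECst c => c
  | EAdd e1 e2 => ev e1 x + ev e2 x
  | EMul e1 e2 => ev e1 x * ev e2 x
  | EExp e => exp (ev e x)
  | ELn e => ln (ev e x)
  | EInv e => / ev e x
  | ESqrt e => sqrt (ev e x)
  end.

Fixpoint dv (e : ex) : ex :=
  match e with
  | EVar => ECst 1
  | ECst _ => ECst 0
  | EAdd e1 e2 => EAdd (dv e1) (dv e2)
  | EMul e1 e2 => EAdd (EMul (dv e1) e2) (EMul e1 (dv e2))
  | EExp e => EMul (dv e) (EExp e)
  | ELn e => EMul (dv e) (EInv e)
  | EInv e => EMul (ECst (-1)) (EMul (dv e) (EMul (EInv e) (EInv e)))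
  | ESqrt e => EMul (dv e) (EInv (EMul (ECst 2) (ESqrt e)))
  end.

Fixpoint wd (e : ex) (x : R) : Prop :=
  match e with
  | EVar => True
  | ECst _ => True
  | EAdd e1 e2 => wd e1 x /\ wd e2 x
  | EMul e1 e2 => wd e1 x /\ wd e2 x
  | EExp e => wd e x
  | ELn e => wd e x /\ 0 < ev e x
  | EInv e => wd e x /\ ev e x <> 0
  | ESqrt e => wd e x /\ 0 < ev e x
  end.

Fixpoint cwd (e : ex) (x : R) : Prop :=
  match e with
  | EVar => True
  | ECst _ => True
  | EAdd e1 e2 => cwd e1 x /\ cwd e2 x
  | EMul e1 e2 => cwd e1 x /\ cwd e2 x
  | EExp e => cwd e x
  | ELn e => cwd e x /\ 0 < ev e x
  | EInv e => cwd e x /\ ev e x <> 0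
  | ESqrt e => cwd e x /\ 0 <= ev e x
  end.

Lemma wd_dv : forall e x, wd e x -> wd (dv e) x.
Proof.
  induction e; simpl; intros x H; repeat split;
  repeat match goal with H : _ /\ _ |- _ => destruct H end; auto.
  all: assert (0 < sqrt (ev e x)) by (apply sqrt_lt_R0; auto); lra.
Qed.

Lemma dpl_ext : forall f g x l, (forall y, f y = g y) ->
  derivable_pt_lim f x l -> derivable_pt_lim g x l.
Proof.
  intros f g x l E H eps Heps. destruct (H eps Heps) as [d Hd].
  exists d. intros h Hh Hd'. rewrite <- !E. apply Hd; auto.
Qed.

Lemma dv_ok : forall e x, wd e x -> derivable_pt_lim (ev e) x (ev (dv e) x).
Proof.
  induction e; simpl; intros x H.
  - apply derivable_pt_lim_id.
  - apply (derivable_pt_lim_const c).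
  - destruct H. apply (derivable_pt_lim_plus (ev e1) (ev e2)); auto.
  - destruct H. apply (derivable_pt_lim_mult (ev e1) (ev e2)); auto.
  - rewrite Rmult_comm.
    apply (derivable_pt_lim_comp (ev e) exp); auto. apply derivable_pt_lim_exp.
  - destruct H. rewrite Rmult_comm.
    apply (derivable_pt_lim_comp (ev e) ln); auto. apply derivable_pt_lim_ln; auto.
  - destruct H as [H1 H2].
    apply dpl_ext with (f := (fct_cte 1 / ev e)%F).
    { intro y. unfold div_fct, fct_cte. unfold Rdiv. ring. }
    replace (-1 * (ev (dv e) x * (/ ev e x * / ev e x)))
      with ((0 * ev e x - ev (dv e) x * fct_cte 1 x) / (ev e x)²).
    2:{ unfold fct_cte, Rsqr. field. auto. }
    apply derivable_pt_lim_div; auto. apply derivable_pt_lim_const.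
  - destruct H. replace (ev (dv e) x * / (2 * sqrt (ev e x)))
     with (/ (2 * sqrt (ev e x)) * ev (dv e) x) by ring.
    apply (derivable_pt_lim_comp (ev e) sqrt); auto. apply derivable_pt_lim_sqrt; auto.
Qed.

Lemma cwd_ok : forall e x, cwd e x -> continuity_pt (ev e) x.
Proof.
  induction e; simpl; intros x H.
  - apply derivable_continuous_pt. exists 1. apply derivable_pt_lim_id.
  - apply continuity_pt_const. intros a b; reflexivity.
  - destruct H. apply (continuity_pt_plus (ev e1) (ev e2)); auto.
  - destruct H. apply (continuity_pt_mult (ev e1) (ev e2)); auto.
  - apply (continuity_pt_comp (ev e) exp); auto.
    apply derivable_continuous_pt. exists (exp (ev e x)). apply derivable_pt_lim_exp.
  - destruct H. apply (continuity_pt_comp (ev e) ln); auto.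
    apply derivable_continuous_pt. exists (/ ev e x). apply derivable_pt_lim_ln; auto.
  - destruct H. apply (continuity_pt_inv (ev e)); auto.
  - destruct H. apply (continuity_pt_comp (ev e) sqrt); auto.
    apply continuity_pt_sqrt; auto.
Qed.

Lemma wd_cwd : forall e x, wd e x -> cwd e x.
Proof. induction e; simpl; intros; try tauto; firstorder lra. Qed.

Lemma smooth_ex : forall b e, (forall x, b < x -> wd e x) ->
  smooth_on_right_of b (ev e).
Proof.
  intros b e H. exists (fun n => ev (Nat.iter n dv e)). split.
  - intros; reflexivity.
  - intros n x Hx. simpl. apply dv_ok.
    induction n; simpl; auto. apply wd_dv; auto.
Qed.

Definition sols (n : nat) (phi : R -> R) (B : R) : Prop :=
  exists l : list R, NoDup l /\ length l = n /\ (forall r, In r l <-> phi r = B).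

Lemma ivt_up : forall phi x y B, continuity phi -> x <= y -> phi x <= B <= phi y ->
  exists z, x <= z <= y /\ phi z = B.
Proof.
  intros phi x y B Hc Hxy HB.
  destruct (IVT_cor (fun r => phi r - B) x y) as [z [Hz1 Hz2]]; auto.
  - apply continuity_minus; auto. apply continuity_const. intros a b; auto.
  - nra.
  - exists z. split; auto. lra.
Qed.

Lemma ivt_down : forall phi x y B, continuity phi -> x <= y -> phi y <= B <= phi x ->
  exists z, x <= z <= y /\ phi z = B.
Proof.
  intros phi x y B Hc Hxy HB.
  destruct (IVT_cor (fun r => phi r - B) x y) as [z [Hz1 Hz2]]; auto.
  - apply continuity_minus; auto. apply continuity_const. intros a b; auto.
  - nra.
  - exists z. split; auto. lra.
Qed.

Section Count.
Variable phi : R -> R.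
Hypothesis Hc : continuity phi.
Hypothesis Hlo : forall B, exists x, phi x < B.
Hypothesis Hhi : forall B, exists x, B < phi x.

Lemma one_sol : (forall x y, x < y -> phi x < phi y) -> forall B, sols 1 phi B.
Proof.
  intros Hi B. destruct (Hlo B) as [x Hx]. destruct (Hhi B) as [y Hy].
  assert (x < y).
  { destruct (Rlt_or_le x y); auto. destruct (Req_dec y x). subst; lra.
    assert (phi y < phi x) by (apply Hi; lra). lra. }
  destruct (ivt_up phi x y B) as [z [Hz1 Hz2]]; auto; try lra.
  exists (z :: nil). split; [constructor; [simpl; tauto|constructor]|split; [reflexivity|]].
  intro r; simpl; split.
  - intros [<-|[]]; auto.
  - intro Hr. left. destruct (Rtotal_order z r) as [h|[h|h]]; auto.
    + apply Hi in h; lra.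
    + apply Hi in h; lra.
Qed.

Variables r1 r2 : R.
Hypothesis H12 : r1 < r2.
Hypothesis I1 : forall x y, x < y <= r1 -> phi x < phi y.
Hypothesis D2 : forall x y, r1 <= x -> x < y -> y <= r2 -> phi y < phi x.
Hypothesis I3 : forall x y, r2 <= x -> x < y -> phi x < phi y.

Let P := phi r1.
Let m := phi r2.

Lemma mP : m < P.
Proof. unfold m, P. apply D2; lra. Qed.

Lemma F1 : forall r, r <= r1 -> phi r <= P.
Proof. intros r H. destruct (Req_dec r r1). subst; unfold P; lra.
  assert (phi r < phi r1) by (apply I1; lra). unfold P; lra. Qed.
Lemma F2 : forall r, r1 <= r <= r2 -> m <= phi r <= P.
Proof. intros r H. unfold m, P.
  destruct (Req_dec r r1); [subst; pose proof mP; unfold m,P in *; lra|].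
  destruct (Req_dec r r2); [subst; pose proof mP; unfold m,P in *; lra|].
  assert (phi r < phi r1) by (apply D2; lra).
  assert (phi r2 < phi r) by (apply D2; lra). lra. Qed.
Lemma F3 : forall r, r2 <= r -> m <= phi r.
Proof. intros r H. destruct (Req_dec r r2). subst; unfold m; lra.
  assert (phi r2 < phi r) by (apply I3; lra). unfold m; lra. Qed.

Lemma U1 : forall x y, x <= r1 -> y <= r1 -> phi x = phi y -> x = y.
Proof. intros x y Hx Hy E. destruct (Rtotal_order x y) as [h|[h|h]]; auto.
  assert (phi x < phi y) by (apply I1; lra). lra.
  assert (phi y < phi x) by (apply I1; lra). lra. Qed.
Lemma U2 : forall x y, r1 <= x <= r2 -> r1 <= y <= r2 -> phi x = phi y -> x = y.
Proof. intros x y Hx Hy E. destruct (Rtotal_order x y) as [h|[h|h]]; auto.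
  assert (phi y < phi x) by (apply D2; lra). lra.
  assert (phi x < phi y) by (apply D2; lra). lra. Qed.
Lemma U3 : forall x y, r2 <= x -> r2 <= y -> phi x = phi y -> x = y.
Proof. intros x y Hx Hy E. destruct (Rtotal_order x y) as [h|[h|h]]; auto.
  assert (phi x < phi y) by (apply I3; lra). lra.
  assert (phi y < phi x) by (apply I3; lra). lra. Qed.

Lemma E1 : forall B, B <= P -> exists z, z <= r1 /\ phi z = B.
Proof.
  intros B HB. destruct (Hlo (Rmin B m)) as [x Hx].
  assert (x <= r1).
  { destruct (Rle_or_lt x r1); auto.
    destruct (Rle_or_lt x r2).
    - pose proof (F2 x). pose proof (Rmin_r B m). lra.
    - pose proof (F3 x). pose proof (Rmin_r B m). lra. }
  destruct (ivt_up phi x r1 B) as [z [Hz1 Hz2]]; auto.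
  pose proof (Rmin_l B m). unfold P in HB. lra.
  exists z; split; auto; lra.
Qed.
Lemma E2 : forall B, m <= B <= P -> exists z, r1 <= z <= r2 /\ phi z = B.
Proof. intros B HB. apply ivt_down; auto; lra. Qed.
Lemma E3 : forall B, m <= B -> exists z, r2 <= z /\ phi z = B.
Proof.
  intros B HB. destruct (Hhi (Rmax B P)) as [x Hx].
  assert (r2 <= x).
  { destruct (Rle_or_lt r2 x); auto.
    destruct (Rle_or_lt x r1).
    - pose proof (F1 x). pose proof (Rmax_r B P). lra.
    - pose proof (F2 x). pose proof (Rmax_r B P). lra. }
  destruct (ivt_up phi r2 x B) as [z [Hz1 Hz2]]; auto.
  pose proof (Rmax_l B P). unfold m in HB. lra.
  exists z; split; auto; lra.
Qed.

Lemma regions : forall r, r <= r1 \/ r1 <= r <= r2 \/ r2 <= r.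
Proof. intro r. lra. Qed.

Lemma three_a : forall B, (B < m \/ P < B) -> sols 1 phi B.
Proof.
  intros B [HB|HB]; pose proof mP.
  - destruct (E1 B) as [z [Hz1 Hz2]]; try lra.
    exists (z :: nil). split; [constructor; [simpl; tauto|constructor]|split; [reflexivity|]].
    intro r; simpl; split; [intros [<-|[]]; auto|].
    intro Hr. left. destruct (regions r) as [h|[h|h]].
    + apply U1; auto; congruence.
    + pose proof (F2 r h); lra.
    + pose proof (F3 r h); lra.
  - destruct (E3 B) as [z [Hz1 Hz2]]; try lra.
    exists (z :: nil). split; [constructor; [simpl; tauto|constructor]|split; [reflexivity|]].
    intro r; simpl; split; [intros [<-|[]]; auto|].
    intro Hr. left. destruct (regions r) as [h|[h|h]].
    + pose proof (F1 r h); lra.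
    + pose proof (F2 r h); lra.
    + apply U3; auto; congruence.
Qed.

Lemma three_b : forall B, (B = m \/ B = P) -> sols 2 phi B.
Proof.
  intros B [HB|HB]; pose proof mP.
  - destruct (E1 B) as [z [Hz1 Hz2]]; try lra.
    assert (z < r1). { destruct (Req_dec z r1); [subst; unfold P, m in *; lra| lra]. }
    exists (z :: r2 :: nil). split.
    { constructor. simpl. intros [h|[]]; lra. constructor; [simpl; tauto|constructor]. }
    split; [reflexivity|].
    intro r; simpl; split; [intros [<-|[<-|[]]]; auto|].
    intro Hr. destruct (regions r) as [h|[h|h]].
    + left. apply U1; auto; congruence.
    + right; left. apply U2; auto; try lra. unfold m in HB; congruence.
    + right; left. apply U3; auto; try lra. unfold m in HB; congruence.
  - destruct (E3 B) as [z [Hz1 Hz2]]; try lra.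
    assert (r2 < z). { destruct (Req_dec z r2); [subst; unfold P, m in *; lra| lra]. }
    exists (r1 :: z :: nil). split.
    { constructor. simpl. intros [h|[]]; lra. constructor; [simpl; tauto|constructor]. }
    split; [reflexivity|].
    intro r; simpl; split; [intros [<-|[<-|[]]]; auto|].
    intro Hr. destruct (regions r) as [h|[h|h]].
    + left. apply U1; auto; try lra. unfold P in HB; congruence.
    + left. apply U2; auto; try lra. unfold P in HB; congruence.
    + right; left. apply U3; auto; congruence.
Qed.

Lemma three_c : forall B, m < B < P -> sols 3 phi B.
Proof.
  intros B HB.
  destruct (E1 B) as [z1 [Hz1 Hz1']]; try lra.
  destruct (E2 B) as [z2 [Hz2 Hz2']]; try lra.
  destruct (E3 B) as [z3 [Hz3 Hz3']]; try lra.
  assert (z1 < r1). { destruct (Req_dec z1 r1); [subst; unfold P in *; lra| lra]. }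
  assert (r1 < z2 < r2).
  { destruct (Req_dec z2 r1); [subst; unfold P in *; lra|].
    destruct (Req_dec z2 r2); [subst; unfold m in *; lra| lra]. }
  assert (r2 < z3). { destruct (Req_dec z3 r2); [subst; unfold m in *; lra| lra]. }
  exists (z1 :: z2 :: z3 :: nil). split.
  { constructor. simpl. intros [h|[h|[]]]; lra.
    constructor. simpl. intros [h|[]]; lra. constructor; [simpl; tauto|constructor]. }
  split; [reflexivity|].
  intro r; simpl; split; [intros [<-|[<-|[<-|[]]]]; auto|].
  intro Hr. destruct (regions r) as [h|[h|h]].
  + left. apply U1; auto; congruence.
  + right; left. apply U2; auto; try lra; congruence.
  + right; right; left. apply U3; auto; try lra; congruence.
Qed.

End Count.

Lemma inc_from_deriv : forall phi phi' (P : R -> Prop),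
  (forall x, derivable_pt_lim phi x (phi' x)) ->
  forall x y, x < y -> (forall c, x < c < y -> 0 < phi' c) -> phi x < phi y.
Proof.
  intros phi phi' P Hd x y Hxy Hp.
  destruct (MVT_cor2 phi phi' x y Hxy) as [c [Hc1 Hc2]]; auto.
  assert (0 < phi' c) by (apply Hp; auto). nra.
Qed.

Lemma dec_from_deriv : forall phi phi',
  (forall x, derivable_pt_lim phi x (phi' x)) ->
  forall x y, x < y -> (forall c, x < c < y -> phi' c < 0) -> phi y < phi x.
Proof.
  intros phi phi' Hd x y Hxy Hp.
  destruct (MVT_cor2 phi phi' x y Hxy) as [c [Hc1 Hc2]]; auto.
  assert (phi' c < 0) by (apply Hp; auto). nra.
Qed.

Lemma inc_except : forall phi phi' r0,
  (forall x, derivable_pt_lim phi x (phi' x)) ->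
  (forall c, c <> r0 -> 0 < phi' c) ->
  forall x y, x < y -> phi x < phi y.
Proof.
  intros phi phi' r0 Hd Hp x y Hxy.
  destruct (Rle_or_lt r0 x).
  - apply (inc_from_deriv phi phi' (fun _ => True)); auto. intros c Hc; apply Hp; lra.
  - destruct (Rle_or_lt y r0).
    + apply (inc_from_deriv phi phi' (fun _ => True)); auto. intros c Hc; apply Hp; lra.
    + apply Rlt_trans with (phi r0).
      * apply (inc_from_deriv phi phi' (fun _ => True)); auto. intros c Hc; apply Hp; lra.
      * apply (inc_from_deriv phi phi' (fun _ => True)); auto. intros c Hc; apply Hp; lra.
Qed.

Lemma ln_le' : forall x y, 0 < x -> x <= y -> ln x <= ln y.
Proof. intros x y Hx Hxy. destruct (Req_dec x y). subst; lra.
  left; apply ln_increasing; lra. Qed.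

Definition phi (q d : nat) (beta r : R) : R :=
  r - (INR d - 1) * ln ((exp (beta + r) + INR q - 1) / (exp r + exp beta + INR q - 2)).

Lemma fix_iff : forall q d beta B r, fmap q d beta B r = r <-> phi q d beta r = B.
Proof. intros. unfold fmap, phi. split; intro; lra. Qed.

Lemma sols_fix : forall n q d beta B, sols n (phi q d beta) B ->
  exactly_n_fixed_points n (fmap q d beta B).
Proof.
  intros n q d beta B [l [H1 [H2 H3]]]. exists l. repeat split; auto.
  - intro h; apply fix_iff; apply H3; auto.
  - intro h; apply H3; apply fix_iff; auto.
Qed.

Definition phr (q d : nat) (beta : R) : ex :=
  EAdd EVar (EMul (ECst (-(INR d - 1)))
   (ELn (EMul (EAdd (EMul (ECst (exp beta)) (EExp EVar)) (ECst (INR q - 1)))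
              (EInv (EAdd (EExp EVar) (ECst (exp beta + (INR q - 1) - 1))))))).

Definition Qf (k c a t : R) : R := (a*t + c)*(t + a + c - 1) - k*t*(a-1)*(a+c).

Section Phi.
Variables q d : nat.
Hypothesis Hq : (2 <= q)%nat.
Hypothesis Hd : (2 <= d)%nat.
Let c := INR q - 1.
Let k := INR d - 1.

Lemma c_ge1 : 1 <= c.
Proof. unfold c. apply le_INR in Hq. simpl in Hq. lra. Qed.
Lemma k_ge1 : 1 <= k.
Proof. unfold k. apply le_INR in Hd. simpl in Hd. lra. Qed.

Lemma phi_ev : forall beta r, phi q d beta r = ev (phr q d beta) r.
Proof.
  intros beta r. unfold phi, phr. simpl. rewrite exp_plus.
  replace (exp r + exp beta + INR q - 2) with (exp r + (exp beta + (INR q - 1) - 1)) by ring.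
  replace (exp beta * exp r + INR q - 1) with (exp beta * exp r + (INR q - 1)) by ring.
  unfold Rdiv. ring.
Qed.

Lemma phr_wd : forall beta r, wd (phr q d beta) r.
Proof.
  intros beta r. pose proof c_ge1. fold c. unfold phr; simpl. fold c.
  pose proof (exp_pos beta). pose proof (exp_pos r).
  assert (0 < exp r + (exp beta + c - 1)) by lra.
  repeat split; try lra.
  apply Rmult_lt_0_compat. nra. apply Rinv_0_lt_compat; lra.
Qed.

Definition phi' beta r := ev (dv (phr q d beta)) r.

Lemma phi_deriv : forall beta r, derivable_pt_lim (phi q d beta) r (phi' beta r).
Proof.
  intros beta r. apply dpl_ext with (f := ev (phr q d beta)).
  intro y; rewrite phi_ev; auto. apply dv_ok. apply phr_wd.
Qed.

Lemma phi_cont : forall beta, continuity (phi q d beta).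
Proof. intros beta x. apply derivable_continuous_pt. exists (phi' beta x). apply phi_deriv. Qed.

Lemma phi'_eq : forall beta r,
  phi' beta r = Qf k c (exp beta) (exp r) /
    ((exp beta * exp r + c) * (exp r + exp beta + c - 1)).
Proof.
  intros beta r. unfold phi', phr, Qf. simpl. fold c. fold k.
  pose proof c_ge1. pose proof (exp_pos beta). pose proof (exp_pos r).
  assert (0 < exp r + (exp beta + c - 1)) by lra.
  assert (0 < exp beta * exp r + c) by nra.
  field. repeat split; lra.
Qed.

Lemma phi'_sign : forall beta r, 0 < Qf k c (exp beta) (exp r) -> 0 < phi' beta r.
Proof.
  intros beta r H. rewrite phi'_eq. pose proof c_ge1. pose proof (exp_pos beta). pose proof (exp_pos r).
  apply Rdiv_lt_0_compat; auto. apply Rmult_lt_0_compat; nra.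
Qed.
Lemma phi'_sign_neg : forall beta r, Qf k c (exp beta) (exp r) < 0 -> phi' beta r < 0.
Proof.
  intros beta r H. rewrite phi'_eq. pose proof c_ge1. pose proof (exp_pos beta). pose proof (exp_pos r).
  assert (0 < (exp beta * exp r + c) * (exp r + exp beta + c - 1)) by (apply Rmult_lt_0_compat; nra).
  unfold Rdiv. assert (0 < / ((exp beta * exp r + c) * (exp r + exp beta + c - 1))) by (apply Rinv_0_lt_compat; auto).
  nra.
Qed.

Lemma phi_bounds : forall beta r, 0 <= beta ->
  r - k * beta <= phi q d beta r <= r - k * ln (c / (exp beta + c - 1)).
Proof.
  intros beta r Hb. pose proof c_ge1. pose proof k_ge1.
  assert (1 <= exp beta). { rewrite <- exp_0. destruct Hb. left; apply exp_increasing; auto. subst; lra. }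
  pose proof (exp_pos r). set (a := exp beta) in *. set (t := exp r) in *.
  unfold phi. fold k. rewrite exp_plus. fold a. fold t.
  replace (a * t + INR q - 1) with (a*t + c) by (unfold c; ring).
  replace (t + a + INR q - 2) with (t + a + c - 1) by (unfold c; ring).
  assert (0 < t + a + c - 1) by lra.
  assert (0 < a * t + c) by nra.
  assert (HX : 0 < (a * t + c) / (t + a + c - 1)) by (apply Rdiv_lt_0_compat; auto).
  split.
  - assert (ln ((a * t + c) / (t + a + c - 1)) <= beta).
    { replace beta with (ln a) by (unfold a; apply ln_exp). apply ln_le'; auto.
      apply Rmult_le_reg_r with (t + a + c - 1); auto. unfold Rdiv. rewrite Rmult_assoc, Rinv_l by lra. nra. }
    nra.
  - assert (ln (c / (a + c - 1)) <= ln ((a * t + c) / (t + a + c - 1))).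
    { apply ln_le'. apply Rdiv_lt_0_compat; lra.
      unfold Rdiv. apply Rmult_le_reg_r with ((t + a + c - 1) * (a + c - 1)). nra.
      replace (c * / (a + c - 1) * ((t + a + c - 1) * (a + c - 1))) with (c * (t + a + c - 1)) by (field; lra).
      replace ((a * t + c) * / (t + a + c - 1) * ((t + a + c - 1) * (a + c - 1))) with ((a * t + c) * (a + c - 1)) by (field; lra).
      assert (0 <= (a-1)*(a+c)*t) by (apply Rmult_le_pos; [apply Rmult_le_pos|]; lra). nra. }
    nra.
Qed.

Lemma phi_lo : forall beta, 0 <= beta -> forall B, exists x, phi q d beta x < B.
Proof.
  intros beta Hb B. exists (B + k * ln (c / (exp beta + c - 1)) - 1).
  pose proof (phi_bounds beta (B + k * ln (c / (exp beta + c - 1)) - 1) Hb). lra.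
Qed.
Lemma phi_hi : forall beta, 0 <= beta -> forall B, exists x, B < phi q d beta x.
Proof.
  intros beta Hb B. exists (B + k * beta + 1).
  pose proof (phi_bounds beta (B + k * beta + 1) Hb). lra.
Qed.

Lemma one_fix : forall beta t0, 0 <= beta ->
  (forall t, 0 < t -> t <> t0 -> 0 < Qf k c (exp beta) t) ->
  forall B, exactly_n_fixed_points 1 (fmap q d beta B).
Proof.
  intros beta t0 Hb HQ B. apply sols_fix.
  apply one_sol. apply phi_cont. apply phi_lo; auto. apply phi_hi; auto.
  set (r0 := if Rlt_dec 0 t0 then ln t0 else 0).
  apply (inc_except _ (phi' beta) r0). apply phi_deriv.
  intros x Hx. apply phi'_sign. apply HQ. apply exp_pos.
  intro E. unfold r0 in Hx. destruct (Rlt_dec 0 t0).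
  - apply Hx. rewrite <- E. rewrite ln_exp. auto.
  - pose proof (exp_pos x). lra.
Qed.

End Phi.


Definition uu (c a : R) := a * (a + (c - 1)).
Definition MM (c k a : R) := (k - 1) * uu c a + - ((k + 1) * c).
Definition DD (c k a : R) := MM c k a * MM c k a + - (4 * c) * uu c a.
Definition UU (c k : R) := c * ((k + 1) * (k + 1)) / ((k - 1) * (k - 1)).
Definition am (c k : R) := (sqrt ((c - 1) * (c - 1) + 4 * UU c k) - (c - 1)) / 2.

Definition AE := EExp EVar.
Definition uE c := EMul AE (EAdd AE (ECst (c - 1))).
Definition ME c k := EAdd (EMul (ECst (k - 1)) (uE c)) (ECst (- ((k + 1) * c))).
Definition DE c k := EAdd (EMul (ME c k) (ME c k)) (EMul (ECst (- (4 * c))) (uE c)).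
Definition tE c k s := EMul (EAdd (ME c k) (EMul (ECst s) (ESqrt (DE c k)))) (EInv (EMul (ECst 2) AE)).
Definition phE c k T := EAdd (ELn T) (EMul (ECst (- k))
   (ELn (EMul (EAdd (EMul AE T) (ECst c)) (EInv (EAdd T (EAdd AE (ECst (c - 1)))))))).

Lemma ev_DE : forall c k x, ev (DE c k) x = DD c k (exp x).
Proof. reflexivity. Qed.
Lemma ev_ME : forall c k x, ev (ME c k) x = MM c k (exp x).
Proof. reflexivity. Qed.
Lemma ev_tE : forall c k s x, ev (tE c k s) x =
  (MM c k (exp x) + s * sqrt (DD c k (exp x))) * / (2 * exp x).
Proof. reflexivity. Qed.

Section Main.
Variables q d : nat.
Hypothesis Hq : (2 <= q)%nat.
Hypothesis Hd : (3 <= d)%nat.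
Let c := INR q - 1.
Let k := INR d - 1.

Lemma c1 : 1 <= c.
Proof. unfold c. apply le_INR in Hq. simpl in Hq. lra. Qed.
Lemma k2 : 2 <= k.
Proof. unfold k. apply le_INR in Hd. simpl in Hd. lra. Qed.

Lemma DD_fact : forall a, DD c k a = (k-1)*(k-1)*(uu c a - UU c k)*(uu c a - c).
Proof. intros. pose proof k2. unfold DD, MM, UU. field. lra. Qed.

Lemma U_gt_c : c < UU c k.
Proof.
  pose proof k2; pose proof c1. unfold UU.
  apply Rmult_lt_reg_r with ((k-1)*(k-1)). nra.
  unfold Rdiv. rewrite Rmult_assoc, Rinv_l by nra. nra.
Qed.

Lemma M_U : (k - 1) * UU c k - (k + 1) * c = 2 * c * (k + 1) / (k - 1).
Proof. pose proof k2. unfold UU. field. lra. Qed.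

Lemma am_eq : uu c (am c k) = UU c k.
Proof.
  pose proof U_gt_c; pose proof c1. unfold uu, am.
  set (s := sqrt ((c - 1) * (c - 1) + 4 * UU c k)).
  assert (s * s = (c - 1) * (c - 1) + 4 * UU c k) by (apply sqrt_sqrt; nra).
  replace ((s - (c - 1)) / 2 * ((s - (c - 1)) / 2 + (c - 1))) with ((s*s - (c-1)*(c-1))/4) by field.
  rewrite H1. field.
Qed.

Lemma am_gt1 : 1 < am c k.
Proof.
  pose proof U_gt_c; pose proof c1. unfold am.
  set (s := sqrt ((c - 1) * (c - 1) + 4 * UU c k)).
  assert (s * s = (c - 1) * (c - 1) + 4 * UU c k) by (apply sqrt_sqrt; nra).
  assert (0 <= s) by apply sqrt_pos.
  assert (c + 1 < s) by nra. lra.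
Qed.

Definition bb := ln (am c k).

Lemma bb_pos : 0 < bb.
Proof. unfold bb. rewrite <- ln_1. apply ln_increasing; [lra|apply am_gt1]. Qed.

Lemma uu_mono : forall a1 a2, 0 < a1 -> a1 <= a2 -> uu c a1 <= uu c a2.
Proof. intros. pose proof c1. unfold uu. nra. Qed.
Lemma uu_smono : forall a1 a2, 0 < a1 -> a1 < a2 -> uu c a1 < uu c a2.
Proof. intros. pose proof c1. unfold uu. nra. Qed.

Lemma Q_quad : forall a t, 4 * a * Qf k c a t = (2*a*t - MM c k a) * (2*a*t - MM c k a) - DD c k a.
Proof. intros. unfold Qf, DD, MM, uu. ring. Qed.

Lemma small_beta : forall beta, 0 <= beta -> beta <= bb ->
  forall B, exactly_n_fixed_points 1 (fmap q d beta B).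
Proof.
  intros beta H0 H1 B.
  pose proof am_gt1. pose proof U_gt_c. pose proof k2.
  set (a := exp beta).
  assert (1 <= a). { unfold a. rewrite <- exp_0. destruct H0. left; apply exp_increasing; auto. subst; lra. }
  assert (a <= am c k). { unfold a. rewrite <- (exp_ln (am c k)) by lra. fold bb.
     destruct H1. left; apply exp_increasing; auto. subst; lra. }
  assert (uu c a <= UU c k) by (rewrite <- am_eq; apply uu_mono; lra).
  assert (c <= uu c a). { replace c with (uu c 1) at 1 by (unfold uu; ring). apply uu_mono; lra. }
  assert (DD c k a <= 0).
  { rewrite DD_fact. assert (0 <= (k-1)*(k-1)) by nra.
    assert ((uu c a - UU c k) * (uu c a - c) <= 0) by nra. nra. }
  apply (one_fix q d ltac:(lia) ltac:(lia) beta (MM c k a / (2 * a))); auto.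
  intros t Ht Hne. fold c k. fold a.
  assert (2*a*t - MM c k a <> 0).
  { intro E. apply Hne. replace (MM c k a) with (2*a*t) by lra. field. lra. }
  assert (0 < 4 * a * Qf k c a t).
  { rewrite Q_quad. assert (0 < (2*a*t - MM c k a) * (2*a*t - MM c k a)).
    { destruct (Rlt_or_le 0 (2*a*t - MM c k a)); [nra|]. assert (2*a*t - MM c k a < 0) by lra. nra. }
    lra. }
  nra.
Qed.

Lemma big_pos : forall beta, bb < beta ->
  0 < DD c k (exp beta) /\ 0 < MM c k (exp beta).
Proof.
  intros beta Hb. pose proof am_gt1. pose proof U_gt_c. pose proof k2. pose proof c1.
  assert (am c k < exp beta). { rewrite <- (exp_ln (am c k)) by lra. apply exp_increasing. auto. }
  assert (UU c k < uu c (exp beta)) by (rewrite <- am_eq; apply uu_smono; lra).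
  split.
  - rewrite DD_fact. assert (0 < (k-1)*(k-1)) by nra.
    assert (0 < (uu c (exp beta) - UU c k) * (uu c (exp beta) - c)) by nra. nra.
  - unfold MM. pose proof M_U.
    assert (0 < 2 * c * (k + 1) / (k - 1)) by (apply Rdiv_lt_0_compat; nra). nra.
Qed.

Definition tt s beta := ev (tE c k s) beta.

Lemma t_pos : forall beta, bb < beta -> 0 < tt (-1) beta /\ tt (-1) beta < tt 1 beta.
Proof.
  intros beta Hb. destruct (big_pos beta Hb) as [HD HM]. unfold tt. rewrite !ev_tE.
  pose proof c1. set (a := exp beta). assert (0 < a) by apply exp_pos. fold a in HD, HM.
  set (s := sqrt (DD c k a)). assert (0 < s) by (apply sqrt_lt_R0; auto).
  assert (s * s = DD c k a) by (apply sqrt_sqrt; lra).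
  assert (0 < uu c a) by (unfold uu; nra).
  assert (s < MM c k a). { unfold DD in H2. nra. }
  assert (0 < / (2 * a)) by (apply Rinv_0_lt_compat; lra).
  split; nra.
Qed.

Lemma Q_fact : forall beta t, bb < beta ->
  Qf k c (exp beta) t = exp beta * (t - tt (-1) beta) * (t - tt 1 beta).
Proof.
  intros beta t Hb. destruct (big_pos beta Hb) as [HD HM]. unfold tt. rewrite !ev_tE.
  set (a := exp beta). assert (0 < a) by apply exp_pos. fold a in HD, HM.
  set (s := sqrt (DD c k a)).
  assert (s * s = DD c k a) by (apply sqrt_sqrt; lra).
  transitivity (a*t*t - MM c k a * t + (MM c k a * MM c k a - s * s) / (4 * a)).
  - rewrite H0. unfold DD, Qf, MM, uu. field. lra.
  - field. lra.
Qed.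

Lemma phE_phi : forall T beta, 0 < ev T beta ->
  ev (phE c k T) beta = phi q d beta (ln (ev T beta)).
Proof.
  intros T beta H. unfold phE, phi. simpl. rewrite exp_plus, exp_ln by auto.
  fold k. replace (exp beta * ev T beta + INR q - 1) with (exp beta * ev T beta + c) by (unfold c; ring).
  replace (ev T beta + exp beta + INR q - 2) with (ev T beta + (exp beta + (c - 1))) by (unfold c; ring).
  unfold Rdiv. ring.
Qed.

Definition Bf s beta := ev (phE c k (tE c k s)) beta.

Lemma large_beta : forall beta, bb < beta ->
  Bf 1 beta < Bf (-1) beta /\
  forall B,
    ((B < Bf 1 beta \/ Bf (-1) beta < B) -> exactly_n_fixed_points 1 (fmap q d beta B)) /\
    ((B = Bf 1 beta \/ B = Bf (-1) beta) -> exactly_n_fixed_points 2 (fmap q d beta B)) /\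
    ((Bf 1 beta < B < Bf (-1) beta) -> exactly_n_fixed_points 3 (fmap q d beta B)).
Proof.
  intros beta Hb. pose proof bb_pos. destruct (t_pos beta Hb) as [T1 T2].
  set (r1 := ln (tt (-1) beta)). set (r2 := ln (tt 1 beta)).
  assert (E1 : Bf (-1) beta = phi q d beta r1) by (unfold Bf, r1, tt; apply phE_phi; exact T1).
  assert (E2 : Bf 1 beta = phi q d beta r2) by (unfold Bf, r2, tt; apply phE_phi; unfold tt in *; lra).
  assert (H12 : r1 < r2) by (apply ln_increasing; auto).
  assert (Hd2 : (2 <= d)%nat) by lia.
  assert (Hphi : forall x, derivable_pt_lim (phi q d beta) x (phi' q d beta x)) by (intro x; apply phi_deriv; auto).
  assert (HI1 : forall x y, x < y <= r1 -> phi q d beta x < phi q d beta y).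
  { intros x y Hxy. apply (inc_from_deriv _ (phi' q d beta) (fun _ => True)); auto; try lra.
    intros z Hz. apply (phi'_sign q d Hq). fold c k. rewrite Q_fact by auto.
    assert (exp z < tt (-1) beta). { rewrite <- (exp_ln (tt (-1) beta)) by auto. apply exp_increasing. unfold r1 in Hxy. lra. }
    pose proof (exp_pos beta). assert (0 < (tt (-1) beta - exp z) * (tt 1 beta - exp z)) by (apply Rmult_lt_0_compat; lra).
    nra. }
  assert (HD2 : forall x y, r1 <= x -> x < y -> y <= r2 -> phi q d beta y < phi q d beta x).
  { intros x y Hx Hxy Hy. apply (dec_from_deriv _ (phi' q d beta)); auto.
    intros z Hz. apply (phi'_sign_neg q d Hq). fold c k. rewrite Q_fact by auto.
    assert (tt (-1) beta < exp z). { rewrite <- (exp_ln (tt (-1) beta)) by auto. apply exp_increasing. unfold r1 in Hx. lra. }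
    assert (exp z < tt 1 beta). { rewrite <- (exp_ln (tt 1 beta)) by lra. apply exp_increasing. unfold r2 in Hy. lra. }
    pose proof (exp_pos beta). assert (0 < (exp z - tt (-1) beta) * (tt 1 beta - exp z)) by (apply Rmult_lt_0_compat; lra).
    nra. }
  assert (HI3 : forall x y, r2 <= x -> x < y -> phi q d beta x < phi q d beta y).
  { intros x y Hx Hxy. apply (inc_from_deriv _ (phi' q d beta) (fun _ => True)); auto.
    intros z Hz. apply (phi'_sign q d Hq). fold c k. rewrite Q_fact by auto.
    assert (tt 1 beta < exp z). { rewrite <- (exp_ln (tt 1 beta)) by lra. apply exp_increasing. unfold r2 in Hx. lra. }
    pose proof (exp_pos beta). assert (0 < (exp z - tt (-1) beta) * (exp z - tt 1 beta)) by (apply Rmult_lt_0_compat; lra).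
    nra. }
  assert (Hc := phi_cont q d Hq beta).
  assert (Hlo := phi_lo q d Hq Hd2 beta ltac:(lra)).
  assert (Hhi := phi_hi q d Hq Hd2 beta ltac:(lra)).
  rewrite E1, E2. split.
  - apply (mP _ r1 r2); auto.
  - intro B. split; [|split]; intro HB; apply sols_fix.
    + apply (three_a _ Hc Hlo Hhi r1 r2); auto.
    + apply (three_b _ Hc Hlo Hhi r1 r2); auto.
    + apply (three_c _ Hc Hlo Hhi r1 r2); auto.
Qed.

Lemma wd_phE : forall T x, wd T x -> 0 < ev T x -> wd (phE c k T) x.
Proof.
  intros T x H1 H2. pose proof c1. pose proof (exp_pos x).
  unfold phE, AE; simpl.
  assert (0 < ev T x + (exp x + (c - 1))) by lra.
  assert (0 < exp x * ev T x + c) by nra.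
  repeat split; auto; try lra.
  apply Rmult_lt_0_compat; auto. apply Rinv_0_lt_compat; auto.
Qed.

Lemma cwd_phE : forall T x, cwd T x -> 0 < ev T x -> cwd (phE c k T) x.
Proof.
  intros T x H1 H2. pose proof c1. pose proof (exp_pos x).
  unfold phE, AE; simpl.
  assert (0 < ev T x + (exp x + (c - 1))) by lra.
  assert (0 < exp x * ev T x + c) by nra.
  repeat split; auto; try lra.
  apply Rmult_lt_0_compat; auto. apply Rinv_0_lt_compat; auto.
Qed.

Lemma wd_tE : forall s x, 0 < DD c k (exp x) -> wd (tE c k s) x.
Proof.
  intros s x H. pose proof (exp_pos x). unfold tE; simpl.
  repeat split; try exact H; lra.
Qed.

Lemma cwd_tE : forall s x, 0 <= DD c k (exp x) -> cwd (tE c k s) x.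
Proof.
  intros s x H. pose proof (exp_pos x). unfold tE; simpl.
  repeat split; try exact H; lra.
Qed.


Lemma Bf_smooth : forall s, (s = 1 \/ s = -1) -> smooth_on_right_of bb (Bf s).
Proof.
  intros s Hs. apply smooth_ex. intros x Hx. destruct (big_pos x Hx) as [HD HM].
  apply wd_phE. apply wd_tE; auto.
  destruct (t_pos x Hx) as [T1 T2]. unfold tt in *.
  destruct Hs; subst; lra.
Qed.

Lemma DD_bb : DD c k (exp bb) = 0.
Proof.
  pose proof am_gt1. unfold bb. rewrite exp_ln by lra. rewrite DD_fact, am_eq. ring.
Qed.

Lemma tE_bb : forall s, ev (tE c k s) bb = MM c k (exp bb) * / (2 * exp bb).
Proof. intro s. rewrite ev_tE, DD_bb, sqrt_0. ring. Qed.

Lemma MM_bb : 0 < MM c k (exp bb).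
Proof.
  pose proof am_gt1. pose proof k2. pose proof c1. unfold bb. rewrite exp_ln by lra.
  unfold MM. rewrite am_eq. pose proof M_U.
  assert (0 < 2 * c * (k + 1) / (k - 1)) by (apply Rdiv_lt_0_compat; nra). lra.
Qed.

Lemma tE_bb_pos : forall s, 0 < ev (tE c k s) bb.
Proof.
  intro s. rewrite tE_bb. pose proof MM_bb. pose proof (exp_pos bb).
  apply Rmult_lt_0_compat; auto. apply Rinv_0_lt_compat; lra.
Qed.

Lemma Bf_cont : forall s, continuity_pt (Bf s) bb.
Proof.
  intro s. apply cwd_ok. apply cwd_phE. apply cwd_tE. rewrite DD_bb; lra. apply tE_bb_pos.
Qed.

Lemma phE_ext : forall T1 T2 x, ev T1 x = ev T2 x -> ev (phE c k T1) x = ev (phE c k T2) x.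
Proof. intros T1 T2 x H. unfold phE. simpl. rewrite H. reflexivity. Qed.

Lemma Bf_bb : Bf 1 bb = Bf (-1) bb.
Proof. unfold Bf. apply phE_ext. rewrite !tE_bb. reflexivity. Qed.

End Main.

Lemma cont_lim : forall f b, continuity_pt f b -> limit1_in f (fun x => b < x) (f b) b.
Proof.
  intros f b H eps Heps. destruct (H eps Heps) as [alp [Ha Hx]].
  exists alp. split; auto. intros x [H1 H2]. apply Hx. split; auto.
  split; [exact I|]. lra.
Qed.

Theorem mainTheorem18 :
  forall q d : nat, (2 <= q)%nat -> (2 <= d)%nat ->
  exists bm : option R,
    ((d = 2)%nat -> bm = None) /\
    ((2 < d)%nat -> bm <> None) /\
    (forall beta, 0 <= beta ->
       (bm = None \/ exists b, bm = Some b /\ beta <= b) ->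
       forall B, exactly_n_fixed_points 1 (fmap q d beta B)) /\
    (forall b, bm = Some b ->
       0 < b /\
       exists Bm Bp : R -> R,
         (forall beta, b < beta -> Bm beta < Bp beta) /\
         smooth_on_right_of b Bm /\ smooth_on_right_of b Bp /\
         (forall beta B, b < beta ->
            ((B < Bm beta \/ Bp beta < B) ->
               exactly_n_fixed_points 1 (fmap q d beta B)) /\
            ((B = Bm beta \/ B = Bp beta) ->
               exactly_n_fixed_points 2 (fmap q d beta B)) /\
            ((Bm beta < B < Bp beta) ->
               exactly_n_fixed_points 3 (fmap q d beta B))) /\
         exists Bc : R,
           limit1_in Bm (fun x => b < x) Bc b /\
           limit1_in Bp (fun x => b < x) Bc b).
Proof.
  intros q d Hq Hd.
  destruct (Nat.eq_dec d 2) as [->|Hd3].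
  - exists None. split; [auto|]. split; [intro; lia|]. split.
    + intros beta Hb _ B. apply (one_fix q 2 Hq (le_n 2) beta 0 Hb).
      intros t Ht _. replace (INR 2 - 1) with 1 by (simpl; lra).
      assert (1 <= INR q - 1) by (apply le_INR in Hq; simpl in Hq; lra).
      pose proof (exp_pos beta). set (a := exp beta) in *. set (c := INR q - 1) in *.
      unfold Qf. replace ((a * t + c) * (t + a + c - 1) - 1 * t * (a - 1) * (a + c))
        with (a*t*t + 2*c*t + c*(a + c - 1)) by ring.
      assert (0 < a*t*t) by (apply Rmult_lt_0_compat; [apply Rmult_lt_0_compat|]; lra).
      assert (0 < c*(a+c-1)) by (apply Rmult_lt_0_compat; lra).
      nra.
    + intros b H; discriminate.
  - assert (H3 : (3 <= d)%nat) by lia. exists (Some (bb q d)).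
    split; [intro; lia|]. split; [discriminate|]. split.
    + intros beta Hb [H|[b0 [H1 H2]]]; [discriminate|]. injection H1 as <-.
      apply small_beta; auto.
    + intros b H. injection H as <-. split; [apply bb_pos; auto|].
      exists (Bf q d 1), (Bf q d (-1)). split; [|split; [|split; [|split]]].
      * intros beta Hb. apply (large_beta q d Hq H3 beta Hb).
      * apply Bf_smooth; auto.
      * apply Bf_smooth; auto.
      * intros beta B Hb. apply (large_beta q d Hq H3 beta Hb).
      * exists (Bf q d 1 (bb q d)). split.
        -- apply cont_lim. apply Bf_cont; auto.
        -- rewrite Bf_bb by auto. apply cont_lim. apply Bf_cont; auto.
Qed.
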